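(* Let $(A,P)$ be a $TD$-algebra and let $A_P$ be the vector space $A$ equipped with the (associative) product $a*_P b:=P(a)b+aP(b)-a\,P(1_A)\,b$. Then $P$ is a Nijenhuis operator for $*_P$, i.e. $P(a)*_P P(b)=P\bigl(P(a)*_P b+a*_P P(b)\bigr)-P^2(a*_P b)$ for all $a,b\in A$.
   Context: $\mathbb{K}$ is a field of characteristic $0$; algebras are associative unital $\mathbb{K}$-algebras (not necessarily commutative). A $TD$-algebra is a pair $(A,P)$ with $P:A\to A$ a $\mathbb{K}$-linear map satisfying the $TD$-relation $P(x)P(y)=P\bigl(P(x)y+xP(y)\bigr)-P\bigl(x\,P(1_A)\,y\bigr)$ for all $x,y\in A$. *)

(* Defs.v *)
From HB Require Import structures.
From mathcomp Require Import all_boot all_order all_algebra.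
Set Implicit Arguments. Unset Strict Implicit. Unset Printing Implicit Defensive.
Import GRing.Theory.
Local Open Scope ring_scope.

Definition TD_relation (K : fieldType) (A : algType K) (P : {linear A -> A}) :=
  forall x y : A, P x * P y = P (P x * y + x * P y) - P (x * P 1 * y).

Definition starP (K : fieldType) (A : algType K) (P : {linear A -> A}) (a b : A) : A :=
  P a * b + a * P b - a * P 1 * b.

(* Main.v *)
Require Import Defs.
From HB Require Import structures.
From mathcomp Require Import all_boot all_order all_algebra.
Local Open Scope ring_scope.
Import GRing.Theory.

Theorem proposition3p5 (K : fieldType) (charK0 : [pchar K] =i pred0)
  (A : algType K) (P : {linear A -> A}) (HTD : TD_relation P) :
  forall a b : A,
    starP P (P a) (P b) =
    P (starP P (P a) b + starP P a (P b)) - P (P (starP P a b)).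
Proof.
move=> a b.
have h4 : forall x, P x * P 1 = P (P x).
  by move=> x; rewrite HTD !mulr1 linearD addrK.
have h3 : P (starP P a b) = P a * P b.
  by rewrite /starP linearB /= HTD.
rewrite h3 /starP.
rewrite !h4 (HTD a (P b)) !(linearD, linearN) /=.
set u := P (P a) * P b. set v := P (P (P a) * b). set w := P (P a * P b). set t := _ - P (a * P 1 * P b).
by rewrite [LHS]addrC addKr [v + w]addrC addrK [w + t]addrC addrK.

Qed.
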